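(* Let $R=\bigoplus_{\alpha\in\Gamma}R_{\alpha}$ be a graded integral domain and let $\star$ be a semistar operation on $R$ such that $R^{\star}\subsetneq R_H$. Then every invertible ideal of $\mathrm{NA}(R,\star)$ is principal.
   Context: $\Gamma$ is a commutative cancellative monoid (written additively) whose quotient group $\langle\Gamma\rangle$ is torsion-free. A graded integral domain $R=\bigoplus_{\alpha\in\Gamma}R_\alpha$ is an integral domain that is the direct sum of additive subgroups $R_\alpha$ with $R_\alpha R_\beta\subseteq R_{\alpha+\beta}$. $K$ is its quotient field, $H$ the set of nonzero homogeneous elements of $R$, and $R_H$ the homogeneous quotient field. For $a\in R_H$, $C(a)$ is the $R$-submodule of $R_H$ generated by the homogeneous components of $a$; for $f=f_0+\cdots+f_nX^n\in R[X]$, $A_f:=\sum_i C(f_i)$. A semistar operation on $R$ is a map $\star$ from the set $\overline{\mathcal F}(R)$ of nonzero $R$-submodules of $K$ to itself, $E\mapsto E^\star$, such that for all $0\ne x\in K$ and $E,F$: $(xE)^\star=xE^\star$; $E\subseteq F\Rightarrow E^\star\subseteq F^\star$; $E\subseteq E^\star$; $(E^\star)^\star=E^\star$. $N(\star):=\{f\in R[X]: f\ne0,\ A_f^\star=R^\star\}$ and $\mathrm{NA}(R,\star):=R[X]_{N(\star)}$. *)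

(* Defs.v *)
From HB Require Import structures.
From mathcomp Require Import all_boot all_order all_algebra.
Set Implicit Arguments. Unset Strict Implicit. Unset Printing Implicit Defensive.
Import Order.TTheory GRing.Theory Num.Theory.
Local Open Scope ring_scope.

Section Sets.
Variable T : Type.
Definition subset (A B : T -> Prop) := forall x, A x -> B x.
Definition seteq (A B : T -> Prop) := forall x, A x <-> B x.
Definition psubset (A B : T -> Prop) := subset A B /\ exists x, B x /\ ~ A x.
End Sets.

Section Modules.
Variable L : comNzRingType.
Definition is_subring (D : L -> Prop) :=
  [/\ D 0, D 1, (forall x y, D x -> D y -> D (x - y)) &
      (forall x y, D x -> D y -> D (x * y))].
Definition is_submod (D E : L -> Prop) :=
  [/\ E 0, (forall x y, E x -> E y -> E (x + y)) &
      (forall d x, D d -> E x -> E (d * x))].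
Definition nz_submod (D E : L -> Prop) := is_submod D E /\ exists x, E x /\ x != 0.
Definition gen_mod (D S : L -> Prop) : L -> Prop := fun x =>
  exists (n : nat) (c v : nat -> L),
    (forall i, (i < n)%N -> D (c i) /\ S (v i)) /\ x = \sum_(i < n) c i * v i.
Definition prod_mod (I J : L -> Prop) : L -> Prop := fun x =>
  exists (n : nat) (a b : nat -> L),
    (forall i, (i < n)%N -> I (a i) /\ J (b i)) /\ x = \sum_(i < n) a i * b i.
Definition scale_set (x : L) (E : L -> Prop) : L -> Prop :=
  fun y => exists e, E e /\ y = x * e.
Definition is_ideal (D I : L -> Prop) := subset I D /\ is_submod D I.
(* I is an invertible ideal of D (L is the quotient field of D):
   I J = D for some D-submodule J of L *)
Definition invertible_ideal (D I : L -> Prop) :=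
  is_ideal D I /\ exists J, is_submod D J /\ seteq (prod_mod I J) D.
Definition principal_ideal (D I : L -> Prop) :=
  exists x, D x /\ seteq I (scale_set x D).
End Modules.

(* Gamma is a submonoid of the torsion-free abelian group G (so Gamma is a
   commutative cancellative monoid whose quotient group, a subgroup of G,
   is torsion-free); R is a subring of the field K, K is its quotient field,
   and Rg a is the homogeneous component R_a (a in Gamma), with
   R = (+)_{a in Gamma} R_a. *)
Record graded_domain (G : zmodType) (K : fieldType) (Gam : G -> Prop)
    (R : K -> Prop) (Rg : G -> K -> Prop) : Prop := {
  gd_torsionfree : forall (n : nat) (x : G), (0 < n)%N -> x *+ n = 0 -> x = 0;
  gd_mon0 : Gam 0;
  gd_monD : forall a b, Gam a -> Gam b -> Gam (a + b);
  gd_subring : is_subring R;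
  gd_quotfield : forall x : K, exists a b, [/\ R a, R b, b != 0 & x = a / b];
  gd_compR : forall a, Gam a -> subset (Rg a) R;
  gd_comp0 : forall a, Gam a -> Rg a 0;
  gd_compB : forall a x y, Gam a -> Rg a x -> Rg a y -> Rg a (x - y);
  gd_compM : forall a b x y, Gam a -> Gam b -> Rg a x -> Rg b y -> Rg (a + b) (x * y);
  gd_decomp : forall r, R r -> exists (s : seq G) (f : G -> K),
      [/\ uniq s, (forall a, a \in s -> Gam a /\ Rg a (f a)) &
          r = \sum_(a <- s) f a];
  gd_indep : forall (s : seq G) (f : G -> K), uniq s ->
      (forall a, a \in s -> Gam a /\ Rg a (f a)) ->
      \sum_(a <- s) f a = 0 -> forall a, a \in s -> f a = 0
}.

Section Graded.
Variables (G : zmodType) (K : fieldType) (Gam : G -> Prop)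
  (R : K -> Prop) (Rg : G -> K -> Prop).

Definition homogeneous (x : K) := exists a, Gam a /\ Rg a x.
Definition RH : K -> Prop := fun x =>
  exists a h, [/\ R a, homogeneous h, h != 0 & x = a / h].
Definition hcomp (r x : K) := exists (s : seq G) (f : G -> K) (a : G),
  [/\ uniq s, (forall b, b \in s -> Gam b /\ Rg b (f b)),
      r = \sum_(b <- s) f b, a \in s & x = f a].
Definition Cont (r : K) : K -> Prop := gen_mod R (hcomp r).
Definition polyR (f : {poly K}) := forall i, R f`_i.
Definition Af (f : {poly K}) : K -> Prop :=
  gen_mod R (fun x => exists i, (i < size f)%N /\ hcomp f`_i x).

Variable star : (K -> Prop) -> (K -> Prop).
Definition semistar :=
  [/\ (forall E, nz_submod R E -> nz_submod R (star E)),
      (forall (x : K) E, x != 0 -> nz_submod R E ->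
          seteq (star (scale_set x E)) (scale_set x (star E))),
      (forall E F, nz_submod R E -> nz_submod R F -> subset E F ->
          subset (star E) (star F)),
      (forall E, nz_submod R E -> subset E (star E)) &
      (forall E, nz_submod R E -> seteq (star (star E)) (star E))].

Definition Nstar (f : {poly K}) :=
  [/\ polyR f, f != 0 & seteq (star (Af f)) (star R)].

Definition NA : {fraction {poly K}} -> Prop := fun z =>
  exists f g, [/\ polyR f, Nstar g & z = FracField.tofrac f / FracField.tofrac g].
End Graded.

(* Main.v *)
Require Import Defs.
From HB Require Import structures.
From mathcomp Require Import all_boot all_order all_algebra.
From Stdlib Require Import ClassicalEpsilon Classical FunctionalExtensionality PropExtensionality.
From mathcomp Require Import zify.
From mathcomp Require classical_sets.
Set Implicit Arguments. Unset Strict Implicit. Unset Printing Implicit Defensive.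
Import Order.TTheory GRing.Theory Num.Theory.
Local Open Scope ring_scope.

Lemma divMM (F : fieldType) (a b c : F) : c != 0 -> a * c / (b * c) = a / b.
Proof. by move=> c0; rewrite invfM mulrACA divff // mulr1. Qed.

Lemma cancel_frac (F : fieldType) (z a b : F) : a != 0 -> b != 0 -> z * (a / b * (b / a)) = z.
Proof. by move=> a0 b0; rewrite mulf_div [b * a]mulrC divff ?mulr1 // mulf_neq0. Qed.

Lemma seteq_eq (T : Type) (A B : T -> Prop) : seteq A B -> A = B.
Proof.
move=> H; apply: functional_extensionality => x; apply: propositional_extensionality; exact: H.
Qed.
Section Ord.
Variable G : zmodType.
Hypothesis tf : forall (n : nat) (x : G), (0 < n)%N -> x *+ n = 0 -> x = 0.

Definition cone (X : G -> Prop) := [/\ forall x y, X x -> X y -> X (x + y),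
  forall x, X x -> X (- x) -> x = 0 & forall n x, (0 < n)%N -> X (x *+ n) -> X x].

Lemma mulrn_swap (y : G) m m' : y *+ m *+ m' = y *+ m' *+ m.
Proof. by rewrite -!mulrnA mulnC. Qed.

Lemma order_exists : exists le : G -> G -> Prop,
  [/\ forall x, le x x, forall x y z, le x y -> le y z -> le x z,
      forall x y, le x y -> le y x -> x = y, forall x y, le x y \/ le y x &
      forall x y z, le x y -> le (x + z) (y + z)].
Proof.
have chain : forall F : classical_sets.set (classical_sets.set G),
    classical_sets.subset F cone -> classical_sets.total_on F classical_sets.subset ->
    cone (classical_sets.bigcup F id).
  move=> F FP Ftot; split.
  - move=> x y [X FX Xx] [Y FY Yy]; case: (Ftot X Y FX FY) => sub.
      exists Y => //; case: (FP Y FY) => H _ _; apply: H => //; exact: sub.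
    exists X => //; case: (FP X FX) => H _ _; apply: H => //; exact: sub.
  - move=> x [X FX Xx] [Y FY Yy]; case: (Ftot X Y FX FY) => sub.
      case: (FP Y FY) => _ H _; apply: H => //; exact: sub.
    case: (FP X FX) => _ H _; apply: H => //; exact: sub.
  - move=> n x n0 [X FX Xx]; exists X => //; case: (FP X FX) => _ _ H; exact: H n0 Xx.
have [A [Acone Amax]] := classical_sets.Zorn_bigcup chain.
have max : forall B, cone B -> (forall x, A x -> B x) -> forall x, B x -> A x.
  move=> B Bc AB x Bx; apply: NNPP => nAx; apply: (Amax B) => //; split => //.
  by move=> sub; apply: nAx; apply: sub.
case: Acone => AD AN AI.
have A0 : A 0.
  apply: (max (fun x => A x \/ x = 0)); last by right.
  - split.
    + move=> x y [Ax|->] [Ay|->]; rewrite ?addr0 ?add0r; by [left; apply: AD| left | left | right].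
    + move=> x [Ax|->] // [Anx|]; first exact: AN.
      by move/eqP; rewrite oppr_eq0 => /eqP.
    + move=> n x n0 [Ax|x0]; first by left; exact: AI n0 Ax.
      by right; exact: tf n0 x0.
  - by move=> x Ax; left.
have AMn : forall a n, A a -> A (a *+ n).
  by move=> a n Aa; elim: n => [|n IH]; rewrite ?mulr0n // mulrS; apply: AD.
have tot : forall x, A x \/ A (- x).
  move=> x; apply: NNPP => /not_or_and [nAx nAnx]; apply: nAx.
  pose B y := exists m k a, [/\ (0 < m)%N, A a & y *+ m = a + x *+ k].
  apply: (max B); last by exists 1%N, 1%N, 0; split => //; rewrite add0r.
  - split.
    + move=> y y' [m [k [a [m0 Aa Ey]]]] [m' [k' [a' [m0' Aa' Ey']]]].
      exists (m * m')%N, (k * m' + k' * m)%N, (a *+ m' + a' *+ m); split.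
      * by rewrite muln_gt0 m0 m0'.
      * by apply: AD; apply: AMn.
      * rewrite mulrnDl mulrnA -[in y' *+ _]mulnC mulrnA Ey Ey' !mulrnDl.
        by rewrite mulrnDr -!mulrnA addrACA.
    + move=> y [m [k [a [m0 Aa Ey]]]] [m' [k' [a' [m0' Aa' Ey']]]].
      have E0 : (a *+ m' + a' *+ m) + x *+ (k * m' + k' * m) = 0.
        rewrite mulrnDr !mulrnA addrACA -mulrnDl -Ey -mulrnDl -Ey'.
        by rewrite !mulNrn (mulrn_swap y m) subrr.
      have As : A (a *+ m' + a' *+ m) by apply: AD; apply: AMn.
      case: (posnP (k * m' + k' * m)) => c0.
        move/eqP: c0; rewrite addn_eq0 => /andP[]; rewrite !muln_eq0.
        rewrite (negbTE (lt0n_neq0 m0)) (negbTE (lt0n_neq0 m0')) !orbF => /eqP k0 /eqP k0'.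
        move: E0 Ey; rewrite k0 k0' !mul0n !mulr0n !addr0 => E0 Ey.
        have am0 : a *+ m' = 0.
          apply: AN; first exact: AMn.
          by move/eqP: E0; rewrite addr_eq0 => /eqP ->; rewrite opprK; apply: AMn.
        have a0 : a = 0 by apply: tf m0' am0.
        by apply: tf m0 _; rewrite Ey a0.
      exfalso; apply: nAnx; apply: (AI _ _ c0).
      by rewrite mulNrn; move/eqP: E0; rewrite addrC addr_eq0 => /eqP ->; rewrite opprK.
    + move=> n y n0 [m [k [a [m0 Aa Ey]]]].
      exists (n * m)%N, k, a; split => //; first by rewrite muln_gt0 n0 m0.
      by rewrite mulrnA.
  - by move=> y Ay; exists 1%N, 0%N, y; split => //; rewrite mulr0n addr0.
exists (fun x y => A (y - x)); split.
- by move=> x; rewrite subrr.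
- by move=> x y z Axy Ayz; have := AD _ _ Ayz Axy; rewrite addrA subrK.
- move=> x y Axy Ayx; apply/eqP; rewrite eq_sym -subr_eq0; apply/eqP; apply: AN => //.
  by rewrite opprB.
- by move=> x y; case: (tot (y - x)); rewrite ?opprB; [left|right].
- by move=> x y z; rewrite opprD addrACA subrr addr0.
Qed.
End Ord.

Lemma max_nat (P : nat -> Prop) N : (forall i, P i -> (i < N)%N) ->
  forall i, P i -> exists m, P m /\ forall j, P j -> (j <= m)%N.
Proof.
elim: N => [|N IH] HP i Pi; first by have := HP i Pi.
case: (classic (P N)) => PN.
  by exists N; split => // j /HP.
apply: (IH _ i Pi) => j Pj; have := HP j Pj; rewrite ltnS leq_eqVlt => /orP[/eqP E|//].
by move: Pj; rewrite E.
Qed.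

Section MaxG.
Variables (G : eqType) (le : G -> G -> Prop).
Hypothesis le_total : forall x y, le x y \/ le y x.
Hypothesis le_refl : forall x, le x x.
Hypothesis le_trans : forall x y z, le x y -> le y z -> le x z.
Lemma max_seq (P : G -> Prop) (s : seq G) : (exists a, a \in s /\ P a) ->
  exists m, [/\ m \in s, P m & forall b, b \in s -> P b -> le b m].
Proof.
elim: s => [|x s IH]; first by case=> a [].
case: (classic (exists a, a \in s /\ P a)) => [/IH [m [ms Pm Hm]]|nex] ex.
  case: (classic (P x)) => Px.
    case: (le_total x m) => lxm.
      exists m; split => //; first by rewrite inE ms orbT.
      move=> b; rewrite inE => /orP[/eqP ->|bs] //; exact: Hm.
    exists x; split => //; first by rewrite inE eqxx.
    move=> b; rewrite inE => /orP[/eqP ->|bs] Pb //; apply: le_trans lxm; exact: Hm.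
  exists m; split => //; first by rewrite inE ms orbT.
  by move=> b; rewrite inE => /orP[/eqP ->|bs] //; exact: Hm.
have Px : P x.
  case: ex => a []; rewrite inE => /orP[/eqP -> //|as_] Pa; by case: nex; exists a.
exists x; split => //; first by rewrite inE eqxx.
move=> b; rewrite inE => /orP[/eqP ->|bs] Pb //; by case: nex; exists b.
Qed.
End MaxG.

Section Main.
Variables (G : zmodType) (K : fieldType) (Gam : G -> Prop) (R : K -> Prop) (Rg : G -> K -> Prop).
Hypothesis gd : graded_domain Gam R Rg.

Lemma R0 : R 0. Proof. by case: (gd_subring gd). Qed.
Lemma R1 : R 1. Proof. by case: (gd_subring gd). Qed.
Lemma RB x y : R x -> R y -> R (x - y). Proof. by case: (gd_subring gd) => _ _ H _; apply: H. Qed.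
Lemma RM x y : R x -> R y -> R (x * y). Proof. by case: (gd_subring gd) => _ _ _ H; apply: H. Qed.
Lemma RN x : R x -> R (- x). Proof. by move=> Hx; rewrite -sub0r; apply: RB => //; apply: R0. Qed.
Lemma RD x y : R x -> R y -> R (x + y).
Proof. by move=> Hx Hy; rewrite -[y]opprK; apply: RB => //; apply: RN. Qed.
Lemma Rsum (I : Type) (r : seq I) (P : pred I) (F : I -> K) :
  (forall i, P i -> R (F i)) -> R (\sum_(i <- r | P i) F i).
Proof. move=> H; apply: big_ind => //; [exact: R0 | exact: RD]. Qed.

Lemma RgN a x : Gam a -> Rg a x -> Rg a (- x).
Proof. move=> Ha Hx; rewrite -sub0r; apply: (gd_compB gd) => //; exact: (gd_comp0 gd). Qed.
Lemma RgD a x y : Gam a -> Rg a x -> Rg a y -> Rg a (x + y).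
Proof. by move=> Ha Hx Hy; rewrite -[y]opprK; apply: (gd_compB gd) => //; apply: RgN. Qed.

Definition isdec r s f := [/\ uniq s, forall a, a \in s -> Gam a /\ Rg a (f a) &
   r = \sum_(a <- s) f a].

Lemma sum_ext (s u : seq G) (f : G -> K) : uniq s -> uniq u -> {subset s <= u} ->
  \sum_(a <- u) (if a \in s then f a else 0) = \sum_(a <- s) f a.
Proof.
move=> us uu su; rewrite -big_mkcond /= -big_filter; apply: perm_big.
apply: uniq_perm; first exact: filter_uniq.
  done.
move=> x; rewrite mem_filter; case: (boolP (x \in s)) => //= xs; by rewrite (su x xs).
Qed.

Lemma isdec_ext r s f u : isdec r s f -> uniq u -> {subset s <= u} ->
  (forall a, a \in u -> Gam a) -> isdec r u (fun a => if a \in s then f a else 0).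
Proof.
move=> [us Hs ->] uu su Hu; split => //; last by rewrite sum_ext.
move=> a au; split; first exact: Hu.
case: ifP => as_; first by case: (Hs a as_).
exact: (gd_comp0 gd (Hu a au)).
Qed.

Lemma dec_unique r s f t g : isdec r s f -> isdec r t g ->
  forall a, (if a \in s then f a else 0) = (if a \in t then g a else 0).
Proof.
move=> ds dt a.
set u := undup (s ++ t).
have uu : uniq u by apply: undup_uniq.
have su : {subset s <= u} by move=> x xs; rewrite mem_undup mem_cat xs.
have tu : {subset t <= u} by move=> x xt; rewrite mem_undup mem_cat xt orbT.
have Hu : forall a, a \in u -> Gam a.
  move=> b; rewrite mem_undup mem_cat => /orP[bs|bt].
    by case: ds => _ H _; case: (H b bs).
  by case: dt => _ H _; case: (H b bt).
have [_ Hs1 Es] := isdec_ext ds uu su Hu.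
have [_ Ht1 Et] := isdec_ext dt uu tu Hu.
pose h b := (if b \in s then f b else 0) - (if b \in t then g b else 0).
have Hind := gd_indep gd (f := h) uu.
have Z : \sum_(b <- u) h b = 0 by rewrite /h sumrB -Es -Et subrr.
case: (boolP (a \in u)) => au.
  apply/eqP; rewrite -subr_eq0; apply/eqP.
  apply: (Hind _ Z a au) => b bu; split; first exact: Hu.
  apply: (gd_compB gd (Hu b bu)); [exact: (proj2 (Hs1 b bu)) | exact: (proj2 (Ht1 b bu))].
have -> : (a \in s) = false by apply/negP => /su; rewrite (negbTE au).
have -> : (a \in t) = false by apply/negP => /tu; rewrite (negbTE au).
done.
Qed.

Definition dch (r : K) : seq G * (G -> K) :=
  epsilon (inhabits ([::], fun _ => 0)) (fun p => isdec r p.1 p.2).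
Definition supp r := (dch r).1.
Definition comp r a := if a \in supp r then (dch r).2 a else 0.

Lemma dch_spec r : R r -> isdec r (supp r) (dch r).2.
Proof.
move=> Hr; rewrite /supp /dch; apply: (epsilon_spec (inhabits ([::], fun _ => 0))
   (fun p => isdec r p.1 p.2)).
have [s [f [H1 H2 H3]]] := gd_decomp gd Hr; by exists (s, f).
Qed.

Lemma comp_dec r s f a : isdec r s f -> comp r a = if a \in s then f a else 0.
Proof.
move=> d; rewrite /comp; apply: (dec_unique _ d).
rewrite /supp /dch; apply: (epsilon_spec (inhabits ([::], fun _ => 0))
   (fun p => isdec r p.1 p.2)); by exists (s, f).
Qed.

Lemma comp_out r a : a \notin supp r -> comp r a = 0.
Proof. by rewrite /comp => /negbTE ->. Qed.

Lemma supp_uniq r : R r -> uniq (supp r).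
Proof. by case/dch_spec. Qed.
Lemma supp_Gam r a : R r -> a \in supp r -> Gam a.
Proof. by case/dch_spec => _ H _ /H []. Qed.

Lemma comp_sumE r : R r -> r = \sum_(a <- supp r) comp r a.
Proof.
move=> Hr; have [_ _ E] := dch_spec Hr; rewrite {1}E.
by apply: eq_big_seq => a ai; rewrite /comp ai.
Qed.

Lemma comp_Rg r a : R r -> Gam a -> Rg a (comp r a).
Proof.
move=> Hr Ha; rewrite /comp; case: ifP => ai; last exact: (gd_comp0 gd).
by have [_ H _] := dch_spec Hr; case: (H a ai).
Qed.

Lemma comp_R r a : R r -> R (comp r a).
Proof.
move=> Hr; case: (boolP (a \in supp r)) => ai; last by rewrite comp_out //; exact: R0.
have Ha := supp_Gam Hr ai; exact: (gd_compR gd Ha (comp_Rg Hr Ha)).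
Qed.

Lemma comp0 a : comp 0 a = 0.
Proof.
have d : isdec 0 [::] (fun _ => 0) by split => //; rewrite big_nil.
by rewrite (comp_dec a d).
Qed.

Lemma comp_hom d v c : Gam d -> Rg d v -> comp v c = if c == d then v else 0.
Proof.
move=> Hd Hv; have D : isdec v [:: d] (fun _ => v).
  by split => //; [move=> a; rewrite inE => /eqP ->| rewrite big_seq1].
by rewrite (comp_dec c D) inE.
Qed.

Lemma comp_add x y a : R x -> R y -> comp (x + y) a = comp x a + comp y a.
Proof.
move=> Hx Hy.
set u := undup (supp x ++ supp y).
have uu : uniq u by apply: undup_uniq.
have su : {subset supp x <= u} by move=> z zs; rewrite mem_undup mem_cat zs.
have tu : {subset supp y <= u} by move=> z zt; rewrite mem_undup mem_cat zt orbT.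
have Hu : forall a, a \in u -> Gam a.
  move=> b; rewrite mem_undup mem_cat => /orP[bs|bt]; [exact: supp_Gam bs| exact: supp_Gam bt].
have [_ H1 E1] := isdec_ext (dch_spec Hx) uu su Hu.
have [_ H2 E2] := isdec_ext (dch_spec Hy) uu tu Hu.
have D : isdec (x + y) u (fun a => comp x a + comp y a).
  split => //; last by rewrite big_split /= -E1 -E2.
  move=> b bu; split; first exact: Hu.
  apply: RgD; [exact: Hu | exact: (proj2 (H1 b bu)) | exact: (proj2 (H2 b bu))].
rewrite (comp_dec a D); case: ifP => // /negbT au.
rewrite !comp_out ?addr0 //; apply/negP; [move/tu | move/su]; by rewrite (negbTE au).
Qed.

Lemma comp_sum (I : Type) (r : seq I) (F : I -> K) a : (forall i, R (F i)) ->
  comp (\sum_(i <- r) F i) a = \sum_(i <- r) comp (F i) a.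
Proof.
move=> HF; elim: r => [|i r IH]; first by rewrite !big_nil comp0.
rewrite !big_cons comp_add ?IH //. by apply: Rsum.
Qed.

Lemma comp_mul x y c : R x -> R y -> comp (x * y) c =
  \sum_(a <- supp x) \sum_(b <- supp y) (if c == a + b then comp x a * comp y b else 0).
Proof.
move=> Hx Hy; rewrite {1}(comp_sumE Hx) {1}(comp_sumE Hy) big_distrl /=.
rewrite comp_sum; last by move=> i; apply: RM; [apply: comp_R | apply: Rsum => j _; apply: comp_R].
apply: eq_big_seq => a ai; rewrite big_distrr /= comp_sum; last by move=> j; apply: RM; apply: comp_R.
apply: eq_big_seq => b bi; apply: comp_hom.
  by apply: (gd_monD gd); [exact: supp_Gam ai | exact: supp_Gam bi].
by apply: (gd_compM gd); [exact: supp_Gam ai | exact: supp_Gam bi | apply: comp_Rg; [|exact: supp_Gam ai] | apply: comp_Rg; [|exact: supp_Gam bi]].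
Qed.

Lemma hcompE r x : R r -> hcomp Gam Rg r x -> exists a, Gam a /\ x = comp r a.
Proof.
move=> Hr [s [f [a [us Hs E ai ->]]]]; exists a; split; first by case: (Hs a ai).
have D : isdec r s f by split.
by rewrite (comp_dec a D) ai.
Qed.

Lemma hcomp_comp r a : R r -> Gam a -> hcomp Gam Rg r (comp r a).
Proof.
move=> Hr Ha; have [us Hs E] := dch_spec Hr.
case: (boolP (a \in supp r)) => ai.
  by exists (supp r), (dch r).2, a; split => //; rewrite /comp ai.
exists (a :: supp r), (fun b => if b == a then 0 else (dch r).2 b), a; split => //.
- by rewrite /= ai us.
- move=> b; rewrite inE => /orP[/eqP ->|bi]; first by rewrite eqxx; split => //; exact: (gd_comp0 gd).
  have -> : (b == a) = false by apply/negP => /eqP eb; move: ai; rewrite -eb bi.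
  exact: Hs.
- rewrite big_cons eqxx add0r {1}E; apply: eq_big_seq => b bi.
  have -> // : (b == a) = false by apply/negP => /eqP eb; move: ai; rewrite -eb bi.
- by rewrite inE eqxx.
- by rewrite eqxx comp_out.
Qed.


Lemma gen_sub (S : K -> Prop) x : S x -> gen_mod R S x.
Proof.
move=> Sx; exists 1%N, (fun _ => 1), (fun _ => x); split; first by move=> i _; split => //; exact: R1.
by rewrite big_ord1 mul1r.
Qed.

Lemma gen0 (S : K -> Prop) : gen_mod R S 0.
Proof. by exists 0%N, (fun _ => 0), (fun _ => 0); split => //; rewrite big_ord0. Qed.

Lemma genD (S : K -> Prop) x y : gen_mod R S x -> gen_mod R S y -> gen_mod R S (x + y).
Proof.
move=> [n1 [c1 [v1 [H1 ->]]]] [n2 [c2 [v2 [H2 ->]]]].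
exists (n1 + n2)%N, (fun i => if (i < n1)%N then c1 i else c2 (i - n1)%N),
  (fun i => if (i < n1)%N then v1 i else v2 (i - n1)%N); split.
  move=> i ilt; case: ifP => il; first exact: H1.
  apply: H2; move/negbT: il; rewrite -leqNgt => il; lia.
rewrite big_split_ord /=; congr (_ + _); apply: eq_bigr => i _ /=.
  by rewrite ltn_ord.
by rewrite ltnNge leq_addr /= addKn.
Qed.

Lemma genM (S : K -> Prop) d x : R d -> gen_mod R S x -> gen_mod R S (d * x).
Proof.
move=> Rd [n [c [v [H ->]]]]; exists n, (fun i => d * c i), v; split.
  by move=> i il; case: (H i il) => Hc Hv; split => //; apply: RM.
by rewrite mulr_sumr; apply: eq_bigr => i _; rewrite mulrA.
Qed.

Lemma gen_submod (S : K -> Prop) : is_submod R (gen_mod R S).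
Proof. split; [exact: gen0 | exact: genD | exact: genM]. Qed.

Lemma gen_min (S E : K -> Prop) : is_submod R E -> (forall x, S x -> E x) ->
  forall x, gen_mod R S x -> E x.
Proof.
move=> [E0 ED EM] SE x [n [c [v [H ->]]]].
apply: (big_ind E) => // i _; case: (H i (ltn_ord i)) => Hc Hv; apply: EM => //; exact: SE.
Qed.

Lemma gen_mono (S T : K -> Prop) : (forall x, S x -> T x) ->
  forall x, gen_mod R S x -> gen_mod R T x.
Proof. move=> ST; apply: gen_min; first exact: gen_submod. by move=> x /ST; apply: gen_sub. Qed.

Lemma R_submod : is_submod R R.
Proof. split; [exact: R0 | exact: RD | exact: RM]. Qed.

Lemma gen_R (S : K -> Prop) : (forall x, S x -> R x) -> forall x, gen_mod R S x -> R x.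
Proof. move=> SR; apply: gen_min => //; exact: R_submod. Qed.

Lemma gen_nz (S : K -> Prop) x : S x -> x != 0 -> nz_submod R (gen_mod R S).
Proof. move=> Sx x0; split; first exact: gen_submod. by exists x; split => //; apply: gen_sub. Qed.

Lemma gen_prod (S T U : K -> Prop) : (forall s t, S s -> T t -> gen_mod R U (s * t)) ->
  forall e f, gen_mod R S e -> gen_mod R T f -> gen_mod R U (e * f).
Proof.
move=> H e f Se Tf.
have sub : forall s, S s -> gen_mod R U (s * f).
  move=> s Ss; apply: (gen_min (E := fun f => gen_mod R U (s * f))) Tf.
  - split; first by rewrite mulr0; exact: gen0.
    + by move=> x y; rewrite mulrDr; apply: genD.
    + by move=> d x Rd; rewrite mulrCA; apply: genM.
  - by move=> t Tt; apply: H.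
apply: (gen_min (E := fun e => gen_mod R U (e * f))) Se => //.
split; first by rewrite mul0r; exact: gen0.
+ by move=> x y; rewrite mulrDl; apply: genD.
+ by move=> d x Rd; rewrite -mulrA; apply: genM.
Qed.

Lemma scale_nz (x : K) (E : K -> Prop) : x != 0 -> nz_submod R E -> nz_submod R (scale_set x E).
Proof.
move=> x0 [[E0 ED EM] [e [Ee e0]]]; split; first split.
- by exists 0; rewrite mulr0.
- by move=> _ _ [a [Ea ->]] [b [Eb ->]]; exists (a + b); rewrite mulrDr; split => //; apply: ED.
- by move=> d _ Rd [a [Ea ->]]; exists (d * a); rewrite mulrCA; split => //; apply: EM.
by exists (x * e); split; [exists e | rewrite mulf_neq0].
Qed.

Variable star : (K -> Prop) -> (K -> Prop).
Hypothesis Hs : semistar R star.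

Lemma star_nz E : nz_submod R E -> nz_submod R (star E).
Proof. by case: Hs => H _ _ _ _; apply: H. Qed.
Lemma star_mono E F : nz_submod R E -> nz_submod R F -> (forall x, E x -> F x) ->
  forall x, star E x -> star F x.
Proof. by case: Hs => _ _ H _ _; apply: H. Qed.
Lemma star_ext E : nz_submod R E -> forall x, E x -> star E x.
Proof. by case: Hs => _ _ _ H _; apply: H. Qed.
Lemma star_idem E : nz_submod R E -> forall x, star (star E) x -> star E x.
Proof. by case: Hs => _ _ _ _ H E1 x; case: (H E E1 x). Qed.
Lemma star_scale x E : x != 0 -> nz_submod R E -> forall y, star E y -> star (scale_set x E) (x * y).
Proof.
case: Hs => _ H _ _ _ x0 E1 y Ey; case: (H x E x0 E1 (x * y)) => _; apply.
by exists y.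
Qed.
Lemma star_scale' x E : x != 0 -> nz_submod R E -> forall z, star (scale_set x E) z ->
  exists y, star E y /\ z = x * y.
Proof. by case: Hs => _ H _ _ _ x0 E1 z /(H x E x0 E1 z). Qed.

Lemma star0 E : nz_submod R E -> star E 0.
Proof. by move=> /star_nz [[]]. Qed.

Lemma star_mul E F U : nz_submod R E -> nz_submod R F -> nz_submod R U ->
  (forall e f, E e -> F f -> U (e * f)) ->
  forall x y, star E x -> star F y -> star U (x * y).
Proof.
move=> E1 F1 U1 EFU x y Ex Fy.
have step1 : forall e, E e -> star U (e * y).
  move=> e Ee; case: (eqVneq e 0) => [->|e0]; first by rewrite mul0r; apply: star0.
  apply: (star_mono (scale_nz e0 F1) U1).
    by move=> _ [f [Ff ->]]; apply: EFU.
  exact: star_scale.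
case: (eqVneq y 0) => [->|y0]; first by rewrite mulr0; apply: star0.
rewrite mulrC; apply: star_idem => //.
apply: (star_mono (scale_nz y0 E1) (star_nz U1)).
  by move=> _ [e [Ee ->]]; rewrite mulrC; exact: step1.
exact: star_scale.
Qed.

Lemma star_one E : nz_submod R E -> (forall x, E x -> R x) -> star E 1 ->
  seteq (star E) (star R).
Proof.
have R1s : nz_submod R R by split; [exact: R_submod | exists 1; split; [exact: R1| exact: oner_neq0]].
move=> E1 ER E1s z; split; first by apply: star_mono.
move=> Rz; apply: star_idem => //; apply: (star_mono R1s) => //; first exact: star_nz.
move=> r Rr; have [[_ _ M] _] := star_nz E1; by rewrite -[r]mulr1; apply: M.
Qed.

Definition Hset (h : {poly K}) : K -> Prop :=
  fun x => exists i, (i < size h)%N /\ hcomp Gam Rg h`_i x.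
Definition U (L : seq K) (S : K -> Prop) : K -> Prop := fun x => x \in L \/ S x.

Lemma Hset_R h : polyR R h -> forall x, Hset h x -> R x.
Proof. move=> Rh x [i [_ /(hcompE (Rh i)) [a [_ ->]]]]; exact: comp_R. Qed.

Lemma Af_R h : polyR R h -> forall x, Af Gam R Rg h x -> R x.
Proof. by move=> Rh; apply: gen_R => //; apply: Hset_R. Qed.

Lemma gen_self r : R r -> gen_mod R (hcomp Gam Rg r) r.
Proof.
move=> Rr; rewrite {2}(comp_sumE Rr) big_seq; apply: (big_ind (gen_mod R _)).
- exact: gen0. - exact: genD.
move=> a ai; apply: gen_sub; apply: (hcomp_comp Rr); exact: supp_Gam ai.
Qed.

Lemma Af_coef h i : polyR R h -> (i < size h)%N -> Af Gam R Rg h h`_i.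
Proof.
move=> Rh il; apply: (gen_mono (S := hcomp Gam Rg h`_i)) => //; last exact: gen_self.
by move=> x Hx; exists i.
Qed.

Lemma Af_nz h : polyR R h -> h != 0 -> nz_submod R (Af Gam R Rg h).
Proof.
move=> Rh h0; split; first exact: gen_submod.
exists (lead_coef h); split; last by rewrite lead_coef_eq0.
apply: Af_coef => //; by rewrite prednK // lt0n size_poly_eq0.
Qed.

Lemma Af_nzU h L : polyR R h -> h != 0 -> nz_submod R (gen_mod R (U L (Hset h))).
Proof.
move=> Rh h0; split; first exact: gen_submod.
have [_ [x [Ax x0]]] := Af_nz Rh h0; exists x; split => //.
by apply: (gen_mono (S := Hset h)) => // y Hy; right.
Qed.

Definition Pfam h (I : K -> Prop) :=
  [/\ forall x, I x -> R x, forall x y, I x -> I y -> I (x + y),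
      forall d x, R d -> I x -> I (d * x) &
      forall L : seq K, (forall x, x \in L -> I x \/ x = 0) ->
        ~ star (gen_mod R (U L (Hset h))) 1].

Lemma Nstar_one f : Nstar Gam R Rg star f -> star (Af Gam R Rg f) 1.
Proof.
case=> Rf f0 E; apply/E; apply: star_ext.
  split; first exact: R_submod. by exists 1; split; [exact: R1| exact: oner_neq0].
exact: R1.
Qed.

Section Le.
Variable le : G -> G -> Prop.
Hypothesis le_refl : forall x, le x x.
Hypothesis le_trans : forall x y z, le x y -> le y z -> le x z.
Hypothesis le_anti : forall x y, le x y -> le y x -> x = y.
Hypothesis le_total : forall x y, le x y \/ le y x.
Hypothesis le_add : forall x y z, le x y -> le (x + z) (y + z).

Lemma le_addl x y z : le x y -> le (z + x) (z + y).
Proof. by rewrite ![z + _]addrC; apply: le_add. Qed.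
Lemma le_cancel x y z : le (z + x) (z + y) -> le x y.
Proof. by move=> /(le_addl (- z)); rewrite !addKr. Qed.

Lemma Nstar_mul_one f g : Nstar Gam R Rg star f -> Nstar Gam R Rg star g ->
  star (Af Gam R Rg (f * g)) 1.
Proof.
move=> Nf Ng; have Sf := Nstar_one Nf; have Sg := Nstar_one Ng.
case: Nf Ng => Rf f0 _ [Rg' g0 _].
set h := f * g.
have Rh : polyR R h by move=> i; rewrite coefM; apply: Rsum => //= j _; apply: RM.
have h0 : h != 0 by rewrite mulf_neq0.
apply: NNPP => nS.
have nzU := fun L => Af_nzU L Rh h0.
have chain : forall F : classical_sets.set (classical_sets.set K),
    classical_sets.subset F (Pfam h) -> classical_sets.total_on F classical_sets.subset ->
    Pfam h (classical_sets.bigcup F id).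
  move=> F FP Ftot; split.
  - by move=> x [X FX Xx]; case: (FP X FX) => H _ _ _; apply: H.
  - move=> x y [X FX Xx] [Y FY Yy]; case: (Ftot X Y FX FY) => sub.
      exists Y => //; case: (FP Y FY) => _ H _ _; apply: H => //; exact: sub.
    exists X => //; case: (FP X FX) => _ H _ _; apply: H => //; exact: sub.
  - move=> d x Rd [X FX Xx]; exists X => //; case: (FP X FX) => _ _ H _; exact: H.
  - move=> L HL.
    have : (forall x, x \in L -> x = 0) \/ exists X, F X /\ forall x, x \in L -> X x \/ x = 0.
      elim: L HL => [|y L IH] HL; first by left.
      have HL' : forall x, x \in L -> classical_sets.bigcup F id x \/ x = 0.
        by move=> x xL; apply: HL; rewrite inE xL orbT.
      have Hy : classical_sets.bigcup F id y \/ y = 0 by apply: HL; rewrite inE eqxx.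
      case: (IH HL') => [L0|[X [FX HX]]].
        case: Hy => [[Y FY Yy]|y0].
          right; exists Y; split => // x; rewrite inE => /orP[/eqP ->|xL]; [by left | by right; apply: L0].
        left => x; rewrite inE => /orP[/eqP -> //|xL]; exact: L0.
      case: Hy => [[Y FY Yy]|y0].
        case: (Ftot X Y FX FY) => sub.
          right; exists Y; split => // x; rewrite inE => /orP[/eqP ->|/HX [/sub|]]; by [left|left|right].
        right; exists X; split => // x; rewrite inE => /orP[/eqP ->|/HX]; by [left; apply: sub|].
      right; exists X; split => // x; rewrite inE => /orP[/eqP ->|/HX]; by [right|].
    case=> [L0|[X [FX HX]]]; last by case: (FP X FX) => _ _ _ H; apply: H.
    move=> S1; apply: nS; move: S1; apply: (star_mono (nzU L) (Af_nz Rh h0)).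
    apply: gen_min; first exact: gen_submod.
    move=> x [/L0 ->|Hx]; [exact: gen0 | exact: gen_sub].
have [M [PM Mmax]] := classical_sets.Zorn_bigcup chain.
have max : forall B, Pfam h B -> (forall x, M x -> B x) -> forall x, B x -> M x.
  move=> B PB MB x Bx; apply: NNPP => nMx; apply: (Mmax B) => //; split => //.
  by move=> sub; apply: nMx; apply: sub.
case: PM => MR MD MM ML.
have HM : forall x, Hset h x -> M x.
  pose B x := exists m e, [/\ M m \/ m = 0, gen_mod R (Hset h) e & x = m + e].
  have RB : forall x, B x -> R x.
    move=> _ [m [e [[Mm|->] He ->]]]; apply: RD; try exact: MR; try exact: R0;
      exact: gen_R (Hset_R Rh) _ He.
  move=> x0 Hx0; apply: (max B); last by exists 0, x0; split; [right | apply: gen_sub | rewrite add0r].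
  - split => //.
    + move=> _ _ [m [e [Hm He ->]]] [m' [e' [Hm' He' ->]]].
      exists (m + m'), (e + e'); split; [|exact: genD|by rewrite addrACA].
      by case: Hm => [Mm|->]; case: Hm' => [Mm'|->]; rewrite ?addr0 ?add0r; auto.
    + move=> d _ Rd [m [e [Hm He ->]]]; exists (d * m), (d * e); split; [|exact: genM|by rewrite mulrDr].
      by case: Hm => [Mm|->]; [left; apply: (MM)|right; rewrite mulr0].
    + move=> L HL.
      have [L' [HL' sub]] : exists L' : seq K, (forall x, x \in L' -> M x \/ x = 0) /\
          forall x, x \in L -> gen_mod R (U L' (Hset h)) x.
        elim: L HL => [|y L IH] HL; first by exists [::].
        have [|L' [HL' sub]] := IH; first by move=> x xL; apply: HL; rewrite inE xL orbT.
        have : B y \/ y = 0 by apply: HL; rewrite inE eqxx.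
        case=> [[m [e [Hm He ->]]]|->].
          exists (m :: L'); split.
            by move=> x; rewrite inE => /orP[/eqP ->|/HL'].
          move=> x; rewrite inE => /orP[/eqP ->|/sub].
            apply: genD; first by apply: gen_sub; left; rewrite inE eqxx.
            by apply: gen_mono He => z Hz; right.
          by apply: gen_mono => z [zL|Hz]; [left; rewrite inE zL orbT|right].
        exists L'; split => // x; rewrite inE => /orP[/eqP ->|/sub //]; exact: gen0.
      move=> S1; apply: (ML L' HL'); move: S1; apply: (star_mono (nzU L) (nzU L')).
      apply: gen_min; first exact: gen_submod.
      by move=> x [/sub //|Hx]; apply: gen_sub; right.
  - by move=> x Mx; exists x, 0; split; [left|exact: gen0|rewrite addr0].
have M0 : M 0.
  have Hx : Hset h (comp h`_(size h).-1 0).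
    exists (size h).-1; split; first by rewrite prednK // lt0n size_poly_eq0.
    by apply: hcomp_comp => //; exact: gd_mon0 gd.
  rewrite -(mul0r (comp h`_(size h).-1 0)); apply: (MM); first exact: R0.
  exact: HM.
have prime : forall a b, R a -> R b -> M (a * b) -> M a \/ M b.
  move=> a b Ra Rb Mab; apply: NNPP => /not_or_and [nMa nMb].
  have ext : forall c, R c -> ~ M c -> exists L : seq K,
      (forall x, x \in L -> exists m r, [/\ M m, R r & x = m + r * c]) /\
      star (gen_mod R (U L (Hset h))) 1.
    move=> c Rc nMc.
    pose B x := exists m r, [/\ M m, R r & x = m + r * c].
    have notP : ~ Pfam h B.
      move=> PB; apply: nMc; apply: (max B PB).
        by move=> x Mx; exists x, 0; split => //; [exact: R0 | rewrite mul0r addr0].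
      by exists 0, 1; split => //; [exact: R1 | rewrite mul1r add0r].
    have RB : forall x, B x -> R x.
      by move=> _ [m [r [Mm Rr ->]]]; apply: RD; [exact: MR | exact: RM].
    have BD : forall x y, B x -> B y -> B (x + y).
      move=> _ _ [m [r [Mm Rr ->]]] [m' [r' [Mm' Rr' ->]]].
      exists (m + m'), (r + r'); split; [exact: MD | exact: RD | by rewrite mulrDl addrACA].
    have BM : forall d x, R d -> B x -> B (d * x).
      move=> d _ Rd [m [r [Mm Rr ->]]]; exists (d * m), (d * r); split;
        [exact: MM | exact: RM | by rewrite mulrDr mulrA].
    have : ~ forall L : seq K, (forall x, x \in L -> B x \/ x = 0) ->
        ~ star (gen_mod R (U L (Hset h))) 1 by move=> HL; apply: notP; split.
    move=> nall; have [L HL'] := not_all_ex_not _ _ nall.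
    have [HL SL'] := imply_to_and _ _ HL'; have SL := NNPP _ SL'.
    exists [seq x <- L | x != 0]; split.
      move=> x; rewrite mem_filter => /andP[x0 xL]; case: (HL x xL) => // x0'.
      by rewrite x0' eqxx in x0.
    move: SL; apply: (star_mono (nzU L) (nzU _)); apply: gen_min; first exact: gen_submod.
    move=> x [xL|Hx]; last by apply: gen_sub; right.
    case: (eqVneq x 0) => [->|x0]; first exact: gen0.
    by apply: gen_sub; left; rewrite mem_filter x0.
  have [La [HLa Sa]] := ext a Ra nMa.
  have [Lb [HLb Sb]] := ext b Rb nMb.
  set L3 := [seq x * y | x <- La, y <- Lb].
  apply: (ML L3).
    move=> z /allpairsP [[x y] [/= xL yL ->]]; left.
    have [m [r [Mm Rr ->]]] := HLa x xL.
    have [m' [r' [Mm' Rr' ->]]] := HLb y yL.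
    rewrite mulrDl; apply: (MD); first by rewrite mulrC; apply: (MM) => //; apply: RD;
      [exact: MR | exact: RM].
    rewrite mulrDr; apply: (MD).
      by apply: (MM) => //; apply: RM.
    have -> : r * a * (r' * b) = (r * r') * (a * b) by rewrite mulrACA.
    by apply: (MM) => //; apply: RM.
  rewrite -(mulr1 1); apply: (star_mul (nzU La) (nzU Lb) (nzU L3)) => //.
  have RLa : forall x, U La (Hset h) x -> R x.
    move=> x [/HLa [m [r [Mm Rr ->]]]|Hx]; last exact: Hset_R Hx.
    by apply: RD; [exact: MR | exact: RM].
  have RLb : forall x, U Lb (Hset h) x -> R x.
    move=> x [/HLb [m [r [Mm Rr ->]]]|Hx]; last exact: Hset_R Hx.
    by apply: RD; [exact: MR | exact: RM].
  apply: gen_prod => s t Us Ut.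
  case: Us => [sL|Hsx].
    case: Ut => [tL|Htx].
      by apply: gen_sub; left; apply: allpairs_f.
    by apply: genM; [apply: RLa; left | apply: gen_sub; right].
  by rewrite mulrC; apply: genM; [apply: RLb | apply: gen_sub; right].
(* (c) Gauss *)
have Mneg : forall x, M x -> M (- x).
  by move=> x Mx; rewrite -mulN1r; apply: (MM) => //; apply: RN; exact: R1.
have MB : forall x y, M x -> M y -> M (x - y) by move=> x y Mx My; apply: (MD) => //; apply: (Mneg).
have Msum : forall (I : Type) (r : seq I) (P : pred I) (F : I -> K),
    (forall i, P i -> M (F i)) -> M (\sum_(i <- r | P i) F i).
  by move=> I r P F HF; apply: big_ind.
have Msum_seq : forall (I : eqType) (r : seq I) (P : pred I) (F : I -> K),
    (forall i, i \in r -> P i -> M (F i)) -> M (\sum_(i <- r | P i) F i).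
  move=> I r P F HF; rewrite big_seq_cond; apply: (Msum) => i /andP[]; exact: HF.
have bad : forall p : {poly K}, polyR R p -> p != 0 -> star (Af Gam R Rg p) 1 ->
    exists i a, ~ M (comp p`_i a).
  move=> p Rp p0 Sp; apply: NNPP => nex.
  have allM : forall i a, M (comp p`_i a).
    by move=> i a; apply: NNPP => nM; apply: nex; exists i, a.
  set L := [seq comp p`_i a | i <- iota 0 (size p), a <- supp p`_i].
  apply: (ML L); first by move=> x /allpairsPdep [i [a [_ _ ->]]]; left.
  move: Sp; apply: (star_mono (Af_nz Rp p0) (nzU L)).
  apply: gen_min; first exact: gen_submod.
  move=> x [i [il /(hcompE (Rp i)) [a [Ga ->]]]].
  case: (boolP (a \in supp p`_i)) => ai; last by rewrite comp_out //; exact: gen0.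
  apply: gen_sub; left; apply: (allpairs_f_dep (fun i a => comp p`_i a)) => //.
  by rewrite mem_iota.
have [i1 [a1 nM1]] := bad f Rf f0 Sf.
have [j1 [b1 nN1]] := bad g Rg' g0 Sg.
have bound : forall p : {poly K}, forall i, (exists a, ~ M (comp p`_i a)) -> (i < size p)%N.
  move=> p i [a nM]; rewrite ltnNge; apply/negP => il; apply: nM.
  by rewrite nth_default // comp0.
have [i0 [[a' nMa'] maxi]] := max_nat (bound f) (ex_intro _ a1 nM1).
have [j0 [[b' nMb'] maxj]] := max_nat (bound g) (ex_intro _ b1 nN1).
have insupp : forall r a, ~ M (comp r a) -> a \in supp r.
  by move=> r a nM; apply: contraT => ai; apply: False_ind; apply: nM; rewrite comp_out.
have [a0 [a0s nMa0 maxa]] := max_seq le_total le_refl le_trans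
  (P := fun a => ~ M (comp f`_i0 a)) (ex_intro _ a' (conj (insupp _ _ nMa') nMa')).
have [b0 [b0s nMb0 maxb]] := max_seq le_total le_refl le_trans
  (P := fun b => ~ M (comp g`_j0 b)) (ex_intro _ b' (conj (insupp _ _ nMb') nMb')).
set n := (i0 + j0)%N.
set c := a0 + b0.
have Gc : Gam c by apply: (gd_monD gd); [exact: supp_Gam a0s | exact: supp_Gam b0s].
have Mc : M (comp h`_n c).
  case: (ltnP n (size h)) => nl.
    by apply: (HM); exists n; split => //; apply: hcomp_comp.
  by rewrite nth_default // comp0.
have RT : forall k, R (f`_k * g`_(n - k)) by move=> k; apply: RM.
have Ei : (i0 < n.+1)%N by rewrite ltnS leq_addr.
have Ecomp : comp h`_n c = \sum_(k < n.+1) comp (f`_k * g`_(n - k)) c.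
  by rewrite /h coefM comp_sum.
rewrite (bigD1 (Ordinal Ei)) //= in Ecomp.
have Mrest : M (\sum_(k < n.+1 | k != Ordinal Ei) comp (f`_k * g`_(n - k)) c).
  apply: (Msum) => k kne; rewrite comp_mul //.
  apply: (Msum) => a _; apply: (Msum) => b _.
  case: ifP => _; last exact: M0.
  have kne' : (k : nat) != i0 by move: kne; apply: contra => /eqP ke; apply/eqP; apply: val_inj.
  case: (ltngtP k i0) => ki; last by rewrite ki eqxx in kne'.
    have Mg : M (comp g`_(n - k) b).
      apply: NNPP => nM; have := maxj (n - k)%N (ex_intro _ b nM).
      have := ltn_ord k; rewrite /n => _ H; move: ki H; move: (nat_of_ord k) => kk; lia.
    by apply: (MM) => //; apply: comp_R.
  have Mf : M (comp f`_k a).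
    apply: NNPP => nM; have := maxi k (ex_intro _ a nM); lia.
  by rewrite mulrC; apply: (MM) => //; apply: comp_R.
have nk : (n - i0)%N = j0 by rewrite /n addKn.
rewrite nk comp_mul // (bigD1_seq a0) //= ?supp_uniq // (bigD1_seq b0) //= ?supp_uniq // eqxx in Ecomp.
rewrite big1 ?addr0 in Ecomp; last first.
  move=> b bne; case: ifP => // /eqP /addrI E; by rewrite E eqxx in bne.
set p := comp f`_i0 a0 * comp g`_j0 b0 in Ecomp.
have Mrest2 : M (\sum_(a <- supp f`_i0 | a != a0) \sum_(b <- supp g`_j0)
     (if c == a + b then comp f`_i0 a * comp g`_j0 b else 0)).
  apply: (Msum_seq) => a as_ ane; apply: (Msum_seq) => b bs _.
  case: ifP => [/eqP E|_]; last exact: M0.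
  case: (le_total a a0) => la.
    have Mg : M (comp g`_j0 b).
      apply: NNPP => nM; have lb := maxb b bs nM.
      have : le b0 b.
        apply: (le_cancel (z := a0)); rewrite -/c E; exact: le_add.
      move=> /(le_anti lb) eb; move: E; rewrite /c eb => /addIr ea.
      by rewrite ea eqxx in ane.
    by apply: (MM) => //; apply: comp_R.
  have Mf : M (comp f`_i0 a).
    apply: NNPP => nM; have la' := maxa a as_ nM.
    by have ea := le_anti la la'; rewrite ea eqxx in ane.
  by rewrite mulrC; apply: (MM) => //; apply: comp_R.
have Mp : M p.
  have -> : p = (comp h`_n c - \sum_(k < n.+1 | k != Ordinal Ei) comp (f`_k * g`_(n - k)) c)
     - \sum_(a <- supp f`_i0 | a != a0) \sum_(b <- supp g`_j0)
     (if c == a + b then comp f`_i0 a * comp g`_j0 b else 0).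
    by rewrite Ecomp addrK addrK.
  by apply: (MB); [apply: (MB)|].
case: (prime _ _ (comp_R _ (Rf i0)) (comp_R _ (Rg' j0)) Mp) => //.
Qed.
End Le.

Lemma Nstar_mul f g : Nstar Gam R Rg star f -> Nstar Gam R Rg star g ->
  Nstar Gam R Rg star (f * g).
Proof.
move=> Nf Ng; have [le [lr lt la lto lad]] := order_exists (gd_torsionfree gd).
have S1 := Nstar_mul_one lr lt la lto lad Nf Ng.
case: Nf Ng => Rf f0 _ [Rg' g0 _].
have Rh : polyR R (f * g) by move=> i; rewrite coefM; apply: Rsum => j _; apply: RM.
have h0 : f * g != 0 by rewrite mulf_neq0.
split => //; apply: star_one => //; [exact: Af_nz | exact: Af_R].
Qed.

Local Notation tf p := (FracField.tofrac p).
Local Notation NA' := (NA Gam R Rg star).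

Lemma polyR_mul p q : polyR R p -> polyR R q -> polyR R (p * q).
Proof. by move=> Hp Hq i; rewrite coefM; apply: Rsum => j _; apply: RM. Qed.

Lemma polyR_Xn k : polyR R ('X^k).
Proof. by move=> i; rewrite coefXn; case: eqP => _; [rewrite mulr1n; exact: R1|rewrite mulr0n; exact: R0]. Qed.

Lemma polyR1 : polyR R 1.
Proof. by have := polyR_Xn 0; rewrite expr0. Qed.

Lemma Nstar1 : Nstar Gam R Rg star 1.
Proof.
have N1 := Af_nz polyR1 (oner_neq0 _).
split => //; [exact: polyR1 | exact: oner_neq0 |].
apply: star_one => //; first exact: Af_R polyR1.
apply: star_ext => //; have := Af_coef (i := 0) polyR1; rewrite size_poly1 coef1 /=; apply.
done.
Qed.

Lemma NA_poly p : polyR R p -> NA' (tf p).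
Proof. by move=> Rp; exists p, 1; split => //; [exact: Nstar1 | rewrite rmorph1 divr1]. Qed.

Lemma NA_mul x y : NA' x -> NA' y -> NA' (x * y).
Proof.
move=> [p [q [Rp Nq ->]]] [p' [q' [Rp' Nq' ->]]]; exists (p * p'), (q * q'); split.
- exact: polyR_mul. - exact: Nstar_mul. - by rewrite !rmorphM mulf_div.
Qed.

Lemma tf_neq0 q : Nstar Gam R Rg star q -> tf q != 0.
Proof. by case=> _ q0 _; rewrite tofrac_eq0. Qed.

Lemma common_den (s : seq (nat * nat)) (w : nat * nat -> {fraction {poly K}}) :
  (forall x, x \in s -> NA' (w x)) ->
  exists Q (p : nat * nat -> {poly K}), Nstar Gam R Rg star Q /\
    forall x, x \in s -> polyR R (p x) /\ w x = tf (p x) / tf Q.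
Proof.
elim: s => [|x0 s IH] Hsw.
  by exists 1, (fun _ => 0); split => //; exact: Nstar1.
have [Q [p [NQ Hp]]] := IH (fun x xs => Hsw x (@mem_behead _ (x0 :: s) x xs)).
have [p0 [q0 [Rp0 Nq0 E0]]] := Hsw x0 (mem_head _ _).
exists (q0 * Q), (fun x => if x == x0 then p0 * Q else p x * q0); split; first exact: Nstar_mul.
have RQ : polyR R Q by case: NQ.
have Rq0 : polyR R q0 by case: Nq0.
move=> x; rewrite inE; case: eqP => [-> _|_ /= xs].
  split; first exact: polyR_mul.
  by rewrite E0 !rmorphM divMM //; exact: tf_neq0.
have [Rpx Ex] := Hp x xs; split; first exact: polyR_mul.
by rewrite Ex !rmorphM [tf q0 * _]mulrC divMM //; exact: tf_neq0.
Qed.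

Lemma digits n i j i' j' : (i < n)%N -> (i' < n)%N -> (i + n * j = i' + n * j')%N ->
  i = i' /\ j = j'.
Proof.
move=> il il' E.
have ii : i = i'.
  have := congr1 (fun m => m %% n)%N E; rewrite /= ![(_ + n * _)%N]addnC ![(n * _)%N]mulnC.
  by rewrite !modnMDl !modn_small.
split => //; move: E; rewrite ii => /addnI /eqP; rewrite eqn_pmul2l ?(leq_ltn_trans (leq0n i') il') //.
by move/eqP.
Qed.

Lemma main_principal (I : {fraction {poly K}} -> Prop) :
  invertible_ideal NA' I -> principal_ideal NA' I.
Proof.
move=> [[INA [I0 ID IM]] [J [[J0 JD JM] HIJ]]].
have NA_IJ : forall u v, I u -> J v -> NA' (u * v).
  move=> u v Iu Jv; apply/HIJ; exists 1%N, (fun _ => u), (fun _ => v); split.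
    by move=> i _; split.
  by rewrite big_ord1.
have NA1 : NA' 1 by have := NA_poly polyR1; rewrite rmorph1.
have [n [a [b [Hab E1]]]] : prod_mod I J 1 by apply/HIJ.
set s := [seq (i, j) | i <- iota 0 n, j <- iota 0 n].
have Hw : forall x, x \in s -> NA' (a x.1 * b x.2).
  move=> x /allpairsP [[i j] [/= il jl ->]] /=; rewrite mem_iota add0n /= in il; rewrite mem_iota add0n /= in jl.
  by apply: NA_IJ; [exact: (Hab i il).1 | ]; case: (Hab j jl).
have [Q [p [NQ Hp]]] := common_den Hw.
have ins : forall i j, (i < n)%N -> (j < n)%N -> (i, j) \in s.
  by move=> i j il jl; apply: allpairs_f; rewrite mem_iota add0n.
have Hp' : forall i j, (i < n)%N -> (j < n)%N ->
    polyR R (p (i, j)) /\ a i * b j = tf (p (i, j)) / tf Q.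
  by move=> i j il jl; exact: (Hp (i, j) (ins i j il jl)).
set D := (\max_(x <- s) size (p x)).+1.
have HD : forall i j, (i < n)%N -> (j < n)%N -> (size (p (i, j)) < D)%N.
  move=> i j il jl; rewrite ltnS.
  exact: (leq_bigmax_seq (F := fun x => size (p x))) (ins i j il jl) _.
have D0 : (0 < D)%N by [].
set P := \sum_(i < n) \sum_(j < n) p (i : nat, j : nat) * 'X^(D * (i + n * j)).
set x := \sum_(i < n) tf ('X^(D * i)) * a i.
set y := \sum_(j < n) tf ('X^(D * (n * j))) * b j.
have Ix : I x.
  apply: (big_ind I) => // i _; apply: IM; first exact: NA_poly (polyR_Xn _).
  exact: (Hab i (ltn_ord i)).1.
have Jy : J y.
  apply: (big_ind J) => // i _; apply: JM; first exact: NA_poly (polyR_Xn _).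
  exact: (Hab i (ltn_ord i)).2.
have tQ0 : tf Q != 0 by exact: tf_neq0.
have Exy : x * y = tf P / tf Q.
  rewrite /x /y big_distrl /= /P rmorph_sum mulr_suml; apply: eq_bigr => i _.
  rewrite big_distrr /= rmorph_sum mulr_suml; apply: eq_bigr => j _.
  rewrite mulrACA (Hp' i j (ltn_ord i) (ltn_ord j)).2 -rmorphM -exprD -mulnDr.
  by rewrite rmorphM mulrA [tf _ * tf (p _)]mulrC.
have RQ : polyR R Q by case: NQ.
have Q0 : Q != 0 by case: NQ.
have PQ : Q = \sum_(i < n) p (i : nat, i : nat).
  have H1 : 1 = tf (\sum_(i < n) p (i : nat, i : nat)) / tf Q.
    rewrite E1 rmorph_sum mulr_suml; apply: eq_bigr => i _.
    exact: (Hp' i i (ltn_ord i) (ltn_ord i)).2.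
  have : tf (\sum_(i < n) p (i : nat, i : nat)) = tf Q.
    by rewrite -[tf (\sum_(i < n) _)](divfK tQ0) -H1 mul1r.
  by move/eqP; rewrite tofrac_eq => /eqP.
have zero : forall i' j' m t, (i' < n)%N -> (j' < n)%N -> (t < D)%N -> m != (i' + n * j')%N ->
    (p (i', j') * 'X^(D * (i' + n * j')))`_(D * m + t) = 0.
  move=> i' j' m t il jl tl mne; rewrite coefMXn; case: ltnP => // le.
  apply: nth_default; have := HD i' j' il jl.
  set e' := (i' + n * j')%N in mne le *.
  have lt : (e' < m)%N.
    rewrite ltn_neqAle eq_sym mne /=; rewrite leqNgt; apply/negP => me.
    have : (D * m + t < D * e')%N.
      apply: (@leq_trans (D * m.+1)); first by rewrite mulnS addnC ltn_add2r.
      by rewrite leq_mul2l me orbT.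
    by rewrite ltnNge le.
  have : (D * e'.+1 <= D * m)%N by rewrite leq_mul2l lt orbT.
  rewrite mulnS; move: (size _) (D * e')%N (D * m)%N => sz A B; clear -tl; move: D tl => DD; lia.
have coefP : forall i j t, (i < n)%N -> (j < n)%N -> (t < D)%N ->
    P`_(D * (i + n * j) + t) = (p (i : nat, j : nat))`_t.
  move=> i j t il jl tl; rewrite /P coef_sum (bigD1 (Ordinal il)) //= coef_sum (bigD1 (Ordinal jl)) //=.
  rewrite coefMXn ltnNge leq_addr /= addKn.
  rewrite big1 ?addr0; last first.
    move=> j' jne; apply: zero => //; apply/eqP => /esym /digits [] // _ ej.
    by move: jne; apply/negP; rewrite negbK; apply/eqP; apply: val_inj; rewrite /= ej.
  rewrite big1 ?addr0 // => i' ine; rewrite coef_sum big1 // => j' _.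
  apply: zero => //; apply/eqP => /esym /digits [] // ei _.
  by move: ine; apply/negP; rewrite negbK; apply/eqP; apply: val_inj; rewrite /= ei.
have RP : polyR R P.
  move=> k; rewrite coef_sum; apply: Rsum => i _; rewrite coef_sum; apply: Rsum => j _.
  by apply: polyR_mul; [exact: (Hp' i j (ltn_ord i) (ltn_ord j)).1 | exact: polyR_Xn].
have AfQP : forall z, Af Gam R Rg Q z -> Af Gam R Rg P z.
  apply: gen_min; first exact: gen_submod.
  move=> z [t [tl Hz]]; have [a0 [Ga ->]] := hcompE (RQ t) Hz.
  rewrite PQ coef_sum comp_sum; last by move=> i; exact: (Hp' i i (ltn_ord i) (ltn_ord i)).1.
  apply: (big_ind (Af Gam R Rg P)); [exact: gen0 | exact: genD |] => i _.
  case: (ltnP t D) => tD.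
    rewrite -(coefP i i t (ltn_ord i) (ltn_ord i) tD).
    case: (ltnP (D * (i + n * i) + t) (size P)) => kl.
      apply: gen_sub; exists (D * (i + n * i) + t)%N; split => //.
      by apply: hcomp_comp.
    by rewrite nth_default // comp0; exact: gen0.
  rewrite nth_default ?comp0; first exact: gen0.
  by apply: ltnW; apply: leq_trans tD; apply: HD.
have P0 : P != 0.
  apply/eqP => P0; have [_ [z [Az z0]]] := Af_nz RQ Q0; move: z0.
  have Z : forall w, gen_mod R (Hset P) w -> w = 0.
    apply: (gen_min (S := Hset P) (E := fun w => w = 0)).
      split => //; [by move=> u v -> ->; rewrite addr0 | by move=> d u _ ->; rewrite mulr0].
    by move=> u [i [il _]]; move: il; rewrite P0 size_poly0.
  by rewrite (Z z (AfQP z Az)) eqxx.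
have NP : Nstar Gam R Rg star P.
  split => //; apply: star_one; [exact: Af_nz | exact: Af_R |].
  apply: (star_mono (Af_nz RQ Q0) (Af_nz RP P0) AfQP); exact: Nstar_one.
have tP0 : tf P != 0 by exact: tf_neq0.
exists x; split; first exact: INA.
move=> z; split.
  move=> Iz; exists (z * y * (tf Q / tf P)); split.
    apply: NA_mul; first exact: NA_IJ.
    exists Q, P; split => //.
  rewrite mulrA (mulrCA x z y) Exy -mulrA; exact: (esym (cancel_frac z tP0 tQ0)).
by move=> [w [NAw ->]]; rewrite mulrC; exact: IM.
Qed.
End Main.

Theorem theorem2p7 (G : zmodType) (K : fieldType) (Gam : G -> Prop)
    (R : K -> Prop) (Rg : G -> K -> Prop) (star : (K -> Prop) -> (K -> Prop)) :
  graded_domain Gam R Rg ->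
  semistar R star ->
  psubset (star R) (RH Gam R Rg) ->
  forall I : {fraction {poly K}} -> Prop,
    invertible_ideal (NA Gam R Rg star) I -> principal_ideal (NA Gam R Rg star) I.
Proof.
move=> gd Hs _ I; exact: main_principal.
Qed.
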